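(* Let $(X,\beta,\kappa)$ be an analytically locally compact space (AnLCS). Then $FO(\mathbf{\Sigma}^0_1(X))\leq_m FO(\mathbb{N}_2)$.
   Context: For a topological space $X$, $\mathbf{\Sigma}^0_1(X)$ denotes the lattice of all open subsets of $X$ (ordered by inclusion), and $FO(\mathbb{A})$ denotes the set of first-order sentences (in the signature of $\mathbb{A}$) true in a structure $\mathbb{A}$; for lattices of sets the signature may be taken to be $\{\subseteq\}$. $\leq_m$ is many-one reducibility of sets of sentences (coded by natural numbers). $\mathbb{N}_2=(\omega\cup P(\omega);\omega,P(\omega),\in,+,\times)$ is the structure of second-order arithmetic, so $FO(\mathbb{N}_2)$ is (equivalent to) the full second-order theory of arithmetic. Let $\{D_n\}$ be the canonical numbering of finite subsets of $\omega$. An analytically locally compact space (AnLCS) is a triple $(X,\beta,\kappa)$ where $X$ is a topological space, $\beta:\omega\to P(X)$ is a numbering of a base of $X$ that contains the empty set, and $\kappa:\omega\to P(X)$ is a numbering of some compact subsets of $X$, such that each $\beta_n$ is a union of some sets from $\{\kappa_i\mid i<\omega\}$, and the relation $\{(i,n)\mid \kappa_i\subseteq\bigcup_{a\in D_n}\beta_a\}$ is analytical (i.e. belongs to $\bigcup_n\Sigma^1_n$ of the analytical hierarchy of subsets of $\omega$). *)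

(* Defs.v *)
From Stdlib Require Import Arith List.
Import ListNotations.

Definition subset {X : Type} (A B : X -> Prop) : Prop := forall x, A x -> B x.

Record is_topology {X : Type} (opn : (X -> Prop) -> Prop) : Prop := {
  top_ext : forall U V : X -> Prop, (forall x, U x <-> V x) -> opn U -> opn V;
  top_full : opn (fun _ => True);
  top_union : forall F : (X -> Prop) -> Prop,
      (forall U, F U -> opn U) -> opn (fun x => exists U, F U /\ U x);
  top_inter : forall U V, opn U -> opn V -> opn (fun x => U x /\ V x)
}.

Definition compact {X : Type} (opn : (X -> Prop) -> Prop) (K : X -> Prop) : Prop :=
  forall F : (X -> Prop) -> Prop,
    (forall U, F U -> opn U) ->
    (forall x, K x -> exists U, F U /\ U x) ->
    exists l : list (X -> Prop),
      (forall U, In U l -> F U) /\ (forall x, K x -> exists U, In U l /\ U x).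

Definition is_base {X : Type} (opn : (X -> Prop) -> Prop) (beta : nat -> X -> Prop) : Prop :=
  (forall n, opn (beta n)) /\
  (forall U, opn U -> forall x, U x -> exists n, beta n x /\ subset (beta n) U).

(* Canonical numbering of finite sets: D_n = { i | bit i of n is 1 } *)
Definition D (n : nat) (i : nat) : Prop := Nat.testbit n i = true.

Definition cpair (a b : nat) : nat := (a + b) * (a + b + 1) / 2 + b.

Inductive prog : Type :=
| PZero : prog
| PSucc : prog
| PProj : nat -> prog               (* i-th argument (0-based) *)
| PComp : prog -> list prog -> prog
| PRec : prog -> prog -> prog
| PMu : prog -> prog.

Inductive eval : prog -> list nat -> nat -> Prop :=
| ev_zero : forall args, eval PZero args 0
| ev_succ : forall x args, eval PSucc (x :: args) (S x)
| ev_proj : forall i args y, nth_error args i = Some y -> eval (PProj i) args y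
| ev_comp : forall f gs args ys y,
    evals gs args ys -> eval f ys y -> eval (PComp f gs) args y
| ev_rec0 : forall f g args y, eval f args y -> eval (PRec f g) (0 :: args) y
| ev_recS : forall f g n args z y,
    eval (PRec f g) (n :: args) z -> eval g (n :: z :: args) y ->
    eval (PRec f g) (S n :: args) y
| ev_mu : forall f args n,
    eval f (n :: args) 0 ->
    (forall m, m < n -> exists k, eval f (m :: args) (S k)) ->
    eval (PMu f) args n
with evals : list prog -> list nat -> list nat -> Prop :=
| evs_nil : forall args, evals [] args []
| evs_cons : forall g gs args y ys,
    eval g args y -> evals gs args ys -> evals (g :: gs) args (y :: ys).

Definition computable (f : nat -> nat) : Prop :=
  exists p : prog, forall n, eval p [n] (f n).

Definition many_one_le (A B : nat -> Prop) : Prop :=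
  exists f : nat -> nat, computable f /\ forall n, A n <-> B (f n).

(* First-order language of lattices of sets: signature { subseteq }    *)
Inductive lform : Type :=
| LSub : nat -> nat -> lform
| LEq : nat -> nat -> lform
| LNot : lform -> lform
| LAnd : lform -> lform -> lform
| LOr : lform -> lform -> lform
| LImp : lform -> lform -> lform
| LAll : nat -> lform -> lform
| LEx : nat -> lform -> lform.

Fixpoint lcode (p : lform) : nat :=
  match p with
  | LSub i j => cpair 0 (cpair i j)
  | LEq i j => cpair 1 (cpair i j)
  | LNot q => cpair 2 (lcode q)
  | LAnd q r => cpair 3 (cpair (lcode q) (lcode r))
  | LOr q r => cpair 4 (cpair (lcode q) (lcode r))
  | LImp q r => cpair 5 (cpair (lcode q) (lcode r))
  | LAll i q => cpair 6 (cpair i (lcode q))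
  | LEx i q => cpair 7 (cpair i (lcode q))
  end.

Fixpoint lfree_in (bd : nat -> Prop) (p : lform) : Prop :=
  match p with
  | LSub i j | LEq i j => bd i /\ bd j
  | LNot q => lfree_in bd q
  | LAnd q r | LOr q r | LImp q r => lfree_in bd q /\ lfree_in bd r
  | LAll i q | LEx i q => lfree_in (fun k => k = i \/ bd k) q
  end.

Definition lsentence (p : lform) : Prop := lfree_in (fun _ => False) p.

Definition upd {A : Type} (rho : nat -> A) (i : nat) (a : A) : nat -> A :=
  fun k => if Nat.eqb k i then a else rho k.

Fixpoint lsat {X : Type} (opn : (X -> Prop) -> Prop) (rho : nat -> X -> Prop)
  (p : lform) : Prop :=
  match p with
  | LSub i j => subset (rho i) (rho j)
  | LEq i j => forall x, rho i x <-> rho j x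
  | LNot q => ~ lsat opn rho q
  | LAnd q r => lsat opn rho q /\ lsat opn rho r
  | LOr q r => lsat opn rho q \/ lsat opn rho r
  | LImp q r => lsat opn rho q -> lsat opn rho r
  | LAll i q => forall U, opn U -> lsat opn (upd rho i U) q
  | LEx i q => exists U, opn U /\ lsat opn (upd rho i U) q
  end.

(* FO(Sigma^0_1(X)) : the set of codes of sentences true in the lattice of
   open sets (ordered by inclusion). *)
Definition FO_open {X : Type} (opn : (X -> Prop) -> Prop) (n : nat) : Prop :=
  exists p : lform, lcode p = n /\ lsentence p /\
    forall rho : nat -> X -> Prop, (forall k, opn (rho k)) -> lsat opn rho p.

(* Second-order arithmetic N_2 = (omega u P(omega); omega, P(omega), in, +, x)
   presented two-sortedly: number variables and set variables.          *)
Inductive aterm : Type :=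
| TVar : nat -> aterm
| TAdd : aterm -> aterm -> aterm
| TMul : aterm -> aterm -> aterm.

Inductive aform : Type :=
| AEq : aterm -> aterm -> aform
| AMem : aterm -> nat -> aform
| ANot : aform -> aform
| AAnd : aform -> aform -> aform
| AOr : aform -> aform -> aform
| AImp : aform -> aform -> aform
| AAllN : nat -> aform -> aform
| AExN : nat -> aform -> aform
| AAllS : nat -> aform -> aform
| AExS : nat -> aform -> aform.

Fixpoint tcode (t : aterm) : nat :=
  match t with
  | TVar i => cpair 0 i
  | TAdd s u => cpair 1 (cpair (tcode s) (tcode u))
  | TMul s u => cpair 2 (cpair (tcode s) (tcode u))
  end.

Fixpoint acode (p : aform) : nat :=
  match p with
  | AEq s t => cpair 0 (cpair (tcode s) (tcode t))
  | AMem t j => cpair 1 (cpair (tcode t) j)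
  | ANot q => cpair 2 (acode q)
  | AAnd q r => cpair 3 (cpair (acode q) (acode r))
  | AOr q r => cpair 4 (cpair (acode q) (acode r))
  | AImp q r => cpair 5 (cpair (acode q) (acode r))
  | AAllN i q => cpair 6 (cpair i (acode q))
  | AExN i q => cpair 7 (cpair i (acode q))
  | AAllS i q => cpair 8 (cpair i (acode q))
  | AExS i q => cpair 9 (cpair i (acode q))
  end.

Fixpoint tvars_in (bn : nat -> Prop) (t : aterm) : Prop :=
  match t with
  | TVar i => bn i
  | TAdd s u | TMul s u => tvars_in bn s /\ tvars_in bn u
  end.

Fixpoint afree_in (bn bs : nat -> Prop) (p : aform) : Prop :=
  match p with
  | AEq s t => tvars_in bn s /\ tvars_in bn t
  | AMem t j => tvars_in bn t /\ bs j
  | ANot q => afree_in bn bs q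
  | AAnd q r | AOr q r | AImp q r => afree_in bn bs q /\ afree_in bn bs r
  | AAllN i q | AExN i q => afree_in (fun k => k = i \/ bn k) bs q
  | AAllS i q | AExS i q => afree_in bn (fun k => k = i \/ bs k) q
  end.

Fixpoint teval (rho : nat -> nat) (t : aterm) : nat :=
  match t with
  | TVar i => rho i
  | TAdd s u => teval rho s + teval rho u
  | TMul s u => teval rho s * teval rho u
  end.

(* Satisfaction in the standard (full) model N_2: set variables range over
   all subsets of omega. *)
Fixpoint asat (rho : nat -> nat) (sg : nat -> nat -> Prop) (p : aform) : Prop :=
  match p with
  | AEq s t => teval rho s = teval rho t
  | AMem t j => sg j (teval rho t)
  | ANot q => ~ asat rho sg q
  | AAnd q r => asat rho sg q /\ asat rho sg r
  | AOr q r => asat rho sg q \/ asat rho sg r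
  | AImp q r => asat rho sg q -> asat rho sg r
  | AAllN i q => forall m : nat, asat (upd rho i m) sg q
  | AExN i q => exists m : nat, asat (upd rho i m) sg q
  | AAllS i q => forall S : nat -> Prop, asat rho (upd sg i S) q
  | AExS i q => exists S : nat -> Prop, asat rho (upd sg i S) q
  end.

Definition asentence (p : aform) : Prop := afree_in (fun _ => False) (fun _ => False) p.

(* FO(N_2): codes of second-order-arithmetic sentences true in N_2 *)
Definition FO_N2 (n : nat) : Prop :=
  exists p : aform, acode p = n /\ asentence p /\
    asat (fun _ => 0) (fun _ _ => False) p.

(* A binary relation on omega is analytical (in the union of the Sigma^1_n)
   iff it is definable (without parameters) in N_2, by a formula whose only
   free variables are the number variables 0 and 1. *)
Definition analytical2 (R : nat -> nat -> Prop) : Prop :=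
  exists p : aform,
    afree_in (fun k => k = 0 \/ k = 1) (fun _ => False) p /\
    forall i n : nat,
      R i n <-> asat (upd (upd (fun _ => 0) 0 i) 1 n) (fun _ _ => False) p.

Definition AnLCS {X : Type} (opn : (X -> Prop) -> Prop)
  (beta kappa : nat -> X -> Prop) : Prop :=
  is_topology opn /\
  is_base opn beta /\
  (exists n, forall x, ~ beta n x) /\
  (forall i, compact opn (kappa i)) /\
  (forall n, exists S : nat -> Prop,
      forall x, beta n x <-> exists i, S i /\ kappa i x) /\
  analytical2 (fun i n =>
      subset (kappa i) (fun x => exists a, D n a /\ beta a x)).

(* Main.v *)
Require Import Defs.
From Stdlib Require Import Arith List Lia PeanoNat Setoid Morphisms.
Import ListNotations.


Inductive CF (k : nat) (f : list nat -> nat) : Prop :=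
  CFi : (exists p, forall l, length l = k -> eval p l (f l)) -> CF k f.

Lemma CF_ext k f g : (forall l, length l = k -> f l = g l) -> CF k f -> CF k g.
Proof. intros H [[p Hp]]. constructor. exists p. intros l Hl. rewrite <- H by auto. auto. Qed.

Lemma CF_proj k i : i < k -> CF k (fun l => nth i l 0).
Proof.
  intros Hi. constructor. exists (PProj i). intros l Hl. constructor.
  apply nth_error_nth'. lia.
Qed.

Lemma CF_zero k : CF k (fun _ => 0).
Proof. constructor. exists PZero. intros; constructor. Qed.

Lemma CF_succ : CF 1 (fun l => S (nth 0 l 0)).
Proof.
  constructor. exists PSucc. intros l Hl. destruct l as [|x [|y l]]; simpl in Hl; try lia.
  constructor.
Qed.

Lemma evals_map k (gs : list (list nat -> nat)) : Forall (CF k) gs ->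
  exists ps, forall l, length l = k -> evals ps l (map (fun g => g l) gs).
Proof.
  induction 1 as [|g gs [[p Hp]] _ [ps Hps]].
  - exists []. intros; constructor.
  - exists (p :: ps). intros; simpl; constructor; auto.
Qed.

Lemma CF_compl k m h (gs : list (list nat -> nat)) :
  CF m h -> length gs = m -> Forall (CF k) gs ->
  CF k (fun l => h (map (fun g => g l) gs)).
Proof.
  intros [[ph Hph]] Hlen Hf. destruct (evals_map k gs Hf) as [ps Hps].
  constructor. exists (PComp ph ps). intros l Hl. eapply ev_comp. apply Hps; auto.
  apply Hph. rewrite length_map; auto.
Qed.

Lemma CF_comp1 k (h : nat -> nat) e1 :
  CF 1 (fun l => h (nth 0 l 0)) -> CF k e1 -> CF k (fun l => h (e1 l)).
Proof.
  intros Hh H1. eapply CF_ext; [|apply (CF_compl k 1 _ [e1] Hh); auto].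
  reflexivity.
Qed.

Lemma CF_comp2 k (h : nat -> nat -> nat) e1 e2 :
  CF 2 (fun l => h (nth 0 l 0) (nth 1 l 0)) -> CF k e1 -> CF k e2 ->
  CF k (fun l => h (e1 l) (e2 l)).
Proof.
  intros Hh H1 H2. eapply CF_ext; [|apply (CF_compl k 2 _ [e1;e2] Hh); auto].
  reflexivity.
Qed.

Lemma CF_comp3 k (h : nat -> nat -> nat -> nat) e1 e2 e3 :
  CF 3 (fun l => h (nth 0 l 0) (nth 1 l 0) (nth 2 l 0)) -> CF k e1 -> CF k e2 -> CF k e3 ->
  CF k (fun l => h (e1 l) (e2 l) (e3 l)).
Proof.
  intros Hh H1 H2 H3. eapply CF_ext; [|apply (CF_compl k 3 _ [e1;e2;e3] Hh); auto].
  reflexivity.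
Qed.

Lemma CF_const k c : CF k (fun _ => c).
Proof.
  induction c. apply CF_zero.
  apply (CF_comp1 k S (fun _ => c)); auto. apply CF_succ.
Qed.

Fixpoint Rf (F : list nat -> nat) (G : list nat -> nat) (n : nat) (args : list nat) : nat :=
  match n with 0 => F args | S m => G (m :: Rf F G m args :: args) end.

Lemma CF_prec k F G : CF k F -> CF (S (S k)) G -> CF (S k) (fun l => Rf F G (hd 0 l) (tl l)).
Proof.
  intros [[pf Hf]] [[pg Hg]]. constructor. exists (PRec pf pg). intros l Hl.
  destruct l as [|n args]; simpl in Hl; [lia|]. simpl.
  induction n; simpl.
  - constructor. apply Hf. lia.
  - econstructor. apply IHn. apply Hg. simpl. lia.
Qed.



Ltac prim h := fail.
Ltac cf :=
  match goal with
  | |- CF _ (fun _ => ?c) => apply CF_const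
  | |- CF _ (fun l => nth ?i l 0) => apply CF_proj; lia
  | |- CF ?k (fun l => ?h (@?e1 l) (@?e2 l) (@?e3 l)) =>
      refine (CF_comp3 k h _ _ _ _ _ _ _); [first [prim h | assumption] | cf | cf | cf]
  | |- CF ?k (fun l => ?h (@?e1 l) (@?e2 l)) =>
      refine (CF_comp2 k h _ _ _ _ _); [first [prim h | assumption] | cf | cf]
  | |- CF ?k (fun l => ?h (@?e1 l)) =>
      refine (CF_comp1 k h _ _ _); [first [prim h | assumption] | cf]
  end.

Lemma cf_succ : CF 1 (fun l => S (nth 0 l 0)).
Proof. exact CF_succ. Qed.
Ltac prim h ::= lazymatch h with | S => exact cf_succ end.

Lemma cf_add : CF 2 (fun l => nth 0 l 0 + nth 1 l 0).
Proof.
  pose proof (CF_prec 1 (fun l => nth 0 l 0) (fun l => S (nth 1 l 0))) as H.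
  eapply CF_ext; [|apply H; cf].
  intros l Hl. destruct l as [|a [|b []]]; simpl in Hl; try lia. simpl.
  induction a; simpl; auto.
Qed.
Ltac prim h ::= lazymatch h with | S => exact cf_succ | Nat.add => exact cf_add end.

Lemma cf_mul : CF 2 (fun l => nth 0 l 0 * nth 1 l 0).
Proof.
  pose proof (CF_prec 1 (fun l => 0) (fun l => nth 2 l 0 + nth 1 l 0)) as H.
  eapply CF_ext; [|apply H; cf].
  intros l Hl. destruct l as [|a [|b []]]; simpl in Hl; try lia. simpl.
  induction a; simpl; auto; try lia.
Qed.
Ltac prim h ::= lazymatch h with | S => exact cf_succ | Nat.add => exact cf_add | Nat.mul => exact cf_mul end.

Lemma cf_pred : CF 1 (fun l => pred (nth 0 l 0)).
Proof.
  pose proof (CF_prec 0 (fun l => 0) (fun l => nth 0 l 0)) as H.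
  eapply CF_ext; [|apply H; cf].
  intros l Hl. destruct l as [|a []]; simpl in Hl; try lia. simpl.
  destruct a; simpl; auto.
Qed.
Ltac prim h ::= lazymatch h with | S => exact cf_succ | Nat.add => exact cf_add | Nat.mul => exact cf_mul | Nat.pred => exact cf_pred end.

Lemma cf_sub : CF 2 (fun l => nth 0 l 0 - nth 1 l 0).
Proof.
  pose proof (CF_prec 1 (fun l => nth 0 l 0) (fun l => pred (nth 1 l 0))) as H.
  assert (H' : CF 2 (fun l => Rf (fun l => nth 0 l 0) (fun l => pred (nth 1 l 0)) (nth 1 l 0) [nth 0 l 0])).
  { pose proof (H ltac:(cf) ltac:(cf)) as H2.
    apply (CF_comp2 2 (fun a b => Rf (fun l => nth 0 l 0) (fun l => pred (nth 1 l 0)) a [b])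
        (fun l => nth 1 l 0) (fun l => nth 0 l 0)); [|cf|cf].
    eapply CF_ext; [|apply H2]. intros l Hl. destruct l as [|a [|b []]]; simpl in Hl; try lia. reflexivity. }
  eapply CF_ext; [|apply H'].
  intros l Hl. destruct l as [|a [|b []]]; simpl in Hl; try lia. simpl.
  induction b; simpl; auto; try lia.
Qed.
Ltac prim h ::= lazymatch h with | S => exact cf_succ | Nat.add => exact cf_add | Nat.mul => exact cf_mul | Nat.pred => exact cf_pred | Nat.sub => exact cf_sub end.

Definition cond (b x y : nat) : nat := match b with 0 => y | _ => x end.
Lemma cf_cond : CF 3 (fun l => cond (nth 0 l 0) (nth 1 l 0) (nth 2 l 0)).
Proof.
  pose proof (CF_prec 2 (fun l => nth 1 l 0) (fun l => nth 2 l 0)) as H.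
  eapply CF_ext; [|apply H; cf].
  intros l Hl. destruct l as [|a [|b [|c []]]]; simpl in Hl; try lia. simpl.
  destruct a; reflexivity.
Qed.
Ltac prim h ::= lazymatch h with | S => exact cf_succ | Nat.add => exact cf_add | Nat.mul => exact cf_mul | Nat.pred => exact cf_pred | Nat.sub => exact cf_sub | cond => exact cf_cond end.

Definition lebn a b := cond (a - b) 0 1.
Lemma cf_lebn : CF 2 (fun l => lebn (nth 0 l 0) (nth 1 l 0)).
Proof. unfold lebn. cf. Qed.
Ltac prim h ::= lazymatch h with | S => exact cf_succ | Nat.add => exact cf_add | Nat.mul => exact cf_mul | Nat.pred => exact cf_pred | Nat.sub => exact cf_sub | cond => exact cf_cond | lebn => exact cf_lebn end.
Definition eqbn a b := cond (lebn a b) (lebn b a) 0.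
Lemma cf_eqbn : CF 2 (fun l => eqbn (nth 0 l 0) (nth 1 l 0)).
Proof. unfold eqbn. cf. Qed.
Ltac prim h ::= lazymatch h with | S => exact cf_succ | Nat.add => exact cf_add | Nat.mul => exact cf_mul | Nat.pred => exact cf_pred | Nat.sub => exact cf_sub | cond => exact cf_cond | lebn => exact cf_lebn | eqbn => exact cf_eqbn end.


Lemma lebn_spec a b : lebn a b = if a <=? b then 1 else 0.
Proof.
  unfold lebn, cond. destruct (a <=? b) eqn:E.
  - apply Nat.leb_le in E. replace (a - b) with 0 by lia. auto.
  - apply Nat.leb_gt in E. destruct (a - b) eqn:E2; [lia|auto].
Qed.
Lemma eqbn_spec a b : eqbn a b = if a =? b then 1 else 0.
Proof.
  unfold eqbn. rewrite !lebn_spec.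
  destruct (a =? b) eqn:E.
  - apply Nat.eqb_eq in E; subst. rewrite Nat.leb_refl. reflexivity.
  - apply Nat.eqb_neq in E. destruct (a <=? b) eqn:E1; simpl; auto.
    destruct (b <=? a) eqn:E2; auto.
    apply Nat.leb_le in E1; apply Nat.leb_le in E2; lia.
Qed.

Fixpoint tri s := match s with 0 => 0 | S m => tri m + S m end.
Definition cp a b := tri (a + b) + b.

Lemma tri_mono a b : a <= b -> tri a <= tri b.
Proof. induction 1; simpl; lia. Qed.
Lemma tri_ge s : s <= tri s.
Proof. induction s; simpl; lia. Qed.

Lemma tri_eq s : tri s * 2 = s * (s + 1).
Proof. induction s; simpl; nia. Qed.

Lemma cpair_cp a b : cpair a b = cp a b.
Proof.
  unfold cpair, cp. f_equal. rewrite <- tri_eq. apply Nat.div_mul. lia.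
Qed.

Lemma cf_tri : CF 1 (fun l => tri (nth 0 l 0)).
Proof.
  pose proof (CF_prec 0 (fun l => 0) (fun l => nth 1 l 0 + S (nth 0 l 0))) as H.
  eapply CF_ext; [|apply H; cf].
  intros l Hl. destruct l as [|a []]; simpl in Hl; try lia. simpl.
  induction a; simpl; auto.
Qed.
Ltac prim h ::= lazymatch h with | S => exact cf_succ | Nat.add => exact cf_add | Nat.mul => exact cf_mul | Nat.pred => exact cf_pred | Nat.sub => exact cf_sub | cond => exact cf_cond | lebn => exact cf_lebn | eqbn => exact cf_eqbn | tri => exact cf_tri end.

Fixpoint sdiag n := match n with 0 => 0
  | S m => cond (lebn (tri (S (sdiag m))) (S m)) (S (sdiag m)) (sdiag m) end.

Lemma cf_sdiag : CF 1 (fun l => sdiag (nth 0 l 0)).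
Proof.
  pose proof (CF_prec 0 (fun l => 0)
    (fun l => cond (lebn (tri (S (nth 1 l 0))) (S (nth 0 l 0))) (S (nth 1 l 0)) (nth 1 l 0))) as H.
  eapply CF_ext; [|apply H; cf].
  intros l Hl. destruct l as [|a []]; simpl in Hl; try lia. simpl.
  induction a; simpl; auto; rewrite IHa; reflexivity.
Qed.
Ltac prim h ::= lazymatch h with | S => exact cf_succ | Nat.add => exact cf_add | Nat.mul => exact cf_mul | Nat.pred => exact cf_pred | Nat.sub => exact cf_sub | cond => exact cf_cond | lebn => exact cf_lebn | eqbn => exact cf_eqbn | tri => exact cf_tri | sdiag => exact cf_sdiag end.

Lemma sdiag_inv n : tri (sdiag n) <= n < tri (S (sdiag n)).
Proof.
  induction n; simpl; [lia|].
  rewrite lebn_spec. destruct (tri (sdiag n) + S (sdiag n) <=? S n) eqn:E; simpl.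
  - apply Nat.leb_le in E. simpl in *. lia.
  - apply Nat.leb_gt in E. simpl in *. lia.
Qed.

Lemma sdiag_unique n s : tri s <= n < tri (S s) -> sdiag n = s.
Proof.
  intros H. pose proof (sdiag_inv n). destruct (Nat.lt_trichotomy (sdiag n) s) as [L|[E|L]]; auto.
  - pose proof (tri_mono (S (sdiag n)) s L). lia.
  - pose proof (tri_mono (S s) (sdiag n) L). lia.
Qed.

Definition snd' n := n - tri (sdiag n).
Definition fst' n := sdiag n - snd' n.
Lemma cf_snd : CF 1 (fun l => snd' (nth 0 l 0)).
Proof. unfold snd'. cf. Qed.
Ltac prim h ::= lazymatch h with | S => exact cf_succ | Nat.add => exact cf_add | Nat.mul => exact cf_mul | Nat.pred => exact cf_pred | Nat.sub => exact cf_sub | cond => exact cf_cond | lebn => exact cf_lebn | eqbn => exact cf_eqbn | tri => exact cf_tri | sdiag => exact cf_sdiag | snd' => exact cf_snd end.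
Lemma cf_fst : CF 1 (fun l => fst' (nth 0 l 0)).
Proof. unfold fst', snd'. cf. Qed.
Ltac prim h ::= lazymatch h with | S => exact cf_succ | Nat.add => exact cf_add | Nat.mul => exact cf_mul | Nat.pred => exact cf_pred | Nat.sub => exact cf_sub | cond => exact cf_cond | lebn => exact cf_lebn | eqbn => exact cf_eqbn | tri => exact cf_tri | sdiag => exact cf_sdiag | snd' => exact cf_snd | fst' => exact cf_fst end.

Lemma sdiag_cp a b : sdiag (cp a b) = a + b.
Proof. apply sdiag_unique. unfold cp. simpl. lia. Qed.
Lemma snd_cp a b : snd' (cp a b) = b.
Proof. unfold snd'. rewrite sdiag_cp. unfold cp. lia. Qed.
Lemma fst_cp a b : fst' (cp a b) = a.
Proof. unfold fst'. rewrite snd_cp, sdiag_cp. lia. Qed.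
Lemma cp_surj n : cp (fst' n) (snd' n) = n.
Proof.
  pose proof (sdiag_inv n). unfold fst', snd', cp. simpl in H.
  replace (sdiag n - (n - tri (sdiag n)) + (n - tri (sdiag n))) with (sdiag n) by lia. lia.
Qed.
Lemma cp_inj a b c d : cp a b = cp c d -> a = c /\ b = d.
Proof.
  intros H. split.
  - rewrite <- (fst_cp a b), <- (fst_cp c d). congruence.
  - rewrite <- (snd_cp a b), <- (snd_cp c d). congruence.
Qed.
Lemma cp_ge a b : a + b <= cp a b.
Proof. unfold cp. pose proof (tri_ge (a+b)). lia. Qed.

Lemma cf_cp : CF 2 (fun l => cp (nth 0 l 0) (nth 1 l 0)).
Proof. unfold cp. cf. Qed.
Ltac prim h ::= lazymatch h with | S => exact cf_succ | Nat.add => exact cf_add | Nat.mul => exact cf_mul | Nat.pred => exact cf_pred | Nat.sub => exact cf_sub | cond => exact cf_cond | lebn => exact cf_lebn | eqbn => exact cf_eqbn | tri => exact cf_tri | sdiag => exact cf_sdiag | snd' => exact cf_snd | fst' => exact cf_fst | cp => exact cf_cp end.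
Lemma cf_cpair : CF 2 (fun l => cpair (nth 0 l 0) (nth 1 l 0)).
Proof. eapply CF_ext; [|apply cf_cp]. intros; rewrite cpair_cp; auto. Qed.
Ltac prim h ::= lazymatch h with | S => exact cf_succ | Nat.add => exact cf_add | Nat.mul => exact cf_mul | Nat.pred => exact cf_pred | Nat.sub => exact cf_sub | cond => exact cf_cond | lebn => exact cf_lebn | eqbn => exact cf_eqbn | tri => exact cf_tri | sdiag => exact cf_sdiag | snd' => exact cf_snd | fst' => exact cf_fst | cp => exact cf_cp | cpair => exact cf_cpair end.

Definition itsnd r x := Nat.iter r snd' x.
Lemma cf_iter : CF 2 (fun l => itsnd (nth 0 l 0) (nth 1 l 0)).
Proof.
  pose proof (CF_prec 1 (fun l => nth 0 l 0) (fun l => snd' (nth 1 l 0))) as H.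
  eapply CF_ext; [|apply H; cf].
  intros l Hl. destruct l as [|a [|b []]]; simpl in Hl; try lia. simpl.
  induction a; simpl; auto; rewrite IHa; reflexivity.
Qed.
Ltac prim h ::= lazymatch h with | S => exact cf_succ | Nat.add => exact cf_add | Nat.mul => exact cf_mul | Nat.pred => exact cf_pred | Nat.sub => exact cf_sub | cond => exact cf_cond | lebn => exact cf_lebn | eqbn => exact cf_eqbn | tri => exact cf_tri | sdiag => exact cf_sdiag | snd' => exact cf_snd | fst' => exact cf_fst | cp => exact cf_cp | cpair => exact cf_cpair | itsnd => exact cf_iter end.

Definition look j k h := fst' (itsnd (k - S j) h).
Lemma cf_look : CF 3 (fun l => look (nth 0 l 0) (nth 1 l 0) (nth 2 l 0)).
Proof. unfold look. cf. Qed.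
Ltac prim h ::= lazymatch h with | S => exact cf_succ | Nat.add => exact cf_add | Nat.mul => exact cf_mul | Nat.pred => exact cf_pred | Nat.sub => exact cf_sub | cond => exact cf_cond | lebn => exact cf_lebn | eqbn => exact cf_eqbn | tri => exact cf_tri | sdiag => exact cf_sdiag | snd' => exact cf_snd | fst' => exact cf_fst | cp => exact cf_cp | cpair => exact cf_cpair | itsnd => exact cf_iter | look => exact cf_look end.

Fixpoint Htab (G : nat -> nat -> nat -> nat) v k := match k with 0 => 0
  | S k' => cp (G v k' (Htab G v k')) (Htab G v k') end.
Definition Fcv G v k := G v k (Htab G v k).

Lemma Htab_S G v k : Htab G v (S k) = cp (G v k (Htab G v k)) (Htab G v k).
Proof. reflexivity. Qed.
Lemma look_ok G v j k : j < k -> look j k (Htab G v k) = Fcv G v j.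
Proof.
  intros H. unfold look, itsnd. replace k with (S j + (k - S j)) at 2 by lia.
  generalize (k - S j) as r. intros r.
  assert (Nat.iter r snd' (Htab G v (S j + r)) = Htab G v (S j)) as ->.
  { induction r. rewrite Nat.add_0_r. reflexivity.
    rewrite Nat.iter_succ_r. rewrite Nat.add_succ_r, Htab_S, snd_cp. auto. }
  rewrite Htab_S, fst_cp. reflexivity.
Qed.

Lemma cf_Fcv G : CF 3 (fun l => G (nth 0 l 0) (nth 1 l 0) (nth 2 l 0)) ->
  CF 2 (fun l => Fcv G (nth 0 l 0) (nth 1 l 0)).
Proof.
  intros HG.
  assert (HR : CF 2 (fun l => Htab G (nth 1 l 0) (nth 0 l 0))).
  { pose proof (CF_prec 1 (fun l => 0)
      (fun l => cp (G (nth 2 l 0) (nth 0 l 0) (nth 1 l 0)) (nth 1 l 0))) as H.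
    eapply CF_ext; [|apply H; cf].
    intros l Hl. destruct l as [|a [|b []]]; simpl in Hl; try lia. simpl.
    induction a; simpl; auto; rewrite IHa; reflexivity. }
  assert (HT : CF 2 (fun l => Htab G (nth 0 l 0) (nth 1 l 0))).
  { apply (CF_comp2 2 (fun a b => Htab G b a) (fun l => nth 1 l 0) (fun l => nth 0 l 0)).
    exact HR. cf. cf. }
  unfold Fcv. cf.
Qed.


Lemma upd_eq {A} (rho : nat -> A) i a : upd rho i a i = a.
Proof. unfold upd. rewrite Nat.eqb_refl. auto. Qed.
Lemma upd_neq {A} (rho : nat -> A) i a k : k <> i -> upd rho i a k = rho k.
Proof. intros H. unfold upd. apply Nat.eqb_neq in H. rewrite H. auto. Qed.

Lemma upd_agree {A} (bn : nat -> Prop) (rho rho' : nat -> A) n m :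
  (forall k, bn k -> rho k = rho' k) -> forall k, (k = n \/ bn k) -> upd rho n m k = upd rho' n m k.
Proof.
  intros H k Hk. destruct (Nat.eq_dec k n). subst; rewrite !upd_eq; auto.
  rewrite !upd_neq; auto. apply H. destruct Hk; auto. congruence.
Qed.

Lemma teval_free bn t rho rho' : tvars_in bn t -> (forall k, bn k -> rho k = rho' k) ->
  teval rho t = teval rho' t.
Proof. induction t; simpl; intros H1 H2; [auto|destruct H1; f_equal; auto|destruct H1; f_equal; auto]. Qed.

Lemma asat_free p : forall bn bs rho rho' sg sg', afree_in bn bs p ->
  (forall k, bn k -> rho k = rho' k) -> (forall k, bs k -> sg k = sg' k) ->
  (asat rho sg p <-> asat rho' sg' p).
Proof.
  induction p; simpl; intros bn bs rho rho' sg sg' Hf Hr Hs.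
  - destruct Hf. rewrite (teval_free bn a rho rho'), (teval_free bn a0 rho rho'); auto; tauto.
  - destruct Hf. rewrite (teval_free bn a rho rho'), Hs; auto; tauto.
  - rewrite (IHp bn bs rho rho' sg sg'); auto. tauto.
  - destruct Hf. rewrite (IHp1 bn bs rho rho' sg sg'), (IHp2 bn bs rho rho' sg sg'); auto. tauto.
  - destruct Hf. rewrite (IHp1 bn bs rho rho' sg sg'), (IHp2 bn bs rho rho' sg sg'); auto. tauto.
  - destruct Hf. rewrite (IHp1 bn bs rho rho' sg sg'), (IHp2 bn bs rho rho' sg sg'); auto. tauto.
  - split; intros H m; specialize (H m);
    [rewrite <- (IHp (fun k => k = n \/ bn k) bs (upd rho n m) (upd rho' n m) sg sg')
    |rewrite (IHp (fun k => k = n \/ bn k) bs (upd rho n m) (upd rho' n m) sg sg')]; eauto using upd_agree.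
  - split; intros [m H]; exists m;
    [rewrite <- (IHp (fun k => k = n \/ bn k) bs (upd rho n m) (upd rho' n m) sg sg')
    |rewrite (IHp (fun k => k = n \/ bn k) bs (upd rho n m) (upd rho' n m) sg sg')]; eauto using upd_agree.
  - split; intros H m; specialize (H m);
    [rewrite <- (IHp bn (fun k => k = n \/ bs k) rho rho' (upd sg n m) (upd sg' n m))
    |rewrite (IHp bn (fun k => k = n \/ bs k) rho rho' (upd sg n m) (upd sg' n m))]; eauto using upd_agree.
  - split; intros [m H]; exists m;
    [rewrite <- (IHp bn (fun k => k = n \/ bs k) rho rho' (upd sg n m) (upd sg' n m))
    |rewrite (IHp bn (fun k => k = n \/ bs k) rho rho' (upd sg n m) (upd sg' n m))]; eauto using upd_agree.
Qed.

Lemma tvars_mono (bn bn' : nat -> Prop) t : (forall k, bn k -> bn' k) -> tvars_in bn t -> tvars_in bn' t.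
Proof. induction t; simpl; intuition. Qed.

Lemma afree_mono p : forall (bn bs bn' bs' : nat -> Prop), (forall k, bn k -> bn' k) ->
  (forall k, bs k -> bs' k) -> afree_in bn bs p -> afree_in bn' bs' p.
Proof.
  induction p; simpl; intros bn bs bn' bs' H1 H2 Hf; intuition (eauto using tvars_mono).
  all: eapply IHp; [| |eauto]; simpl; intuition.
Qed.

Lemma lsat_ext {X} (opn : (X -> Prop) -> Prop) p : forall rho rho',
  (forall j x, rho j x <-> rho' j x) -> (lsat opn rho p <-> lsat opn rho' p).
Proof.
  induction p; simpl; intros rho rho' H.
  - unfold subset. split; intros Hs x; specialize (Hs x); rewrite !H in *; auto.
  - split; intros Hs x; specialize (Hs x); rewrite !H in *; auto.
  - rewrite (IHp rho rho'); tauto.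
  - rewrite (IHp1 rho rho'), (IHp2 rho rho'); tauto.
  - rewrite (IHp1 rho rho'), (IHp2 rho rho'); tauto.
  - rewrite (IHp1 rho rho'), (IHp2 rho rho'); tauto.
  - assert (forall U, lsat opn (upd rho n U) p <-> lsat opn (upd rho' n U) p).
    { intros U. apply IHp. intros j x. unfold upd. destruct (j =? n); tauto || apply H. }
    firstorder.
  - assert (forall U, lsat opn (upd rho n U) p <-> lsat opn (upd rho' n U) p).
    { intros U. apply IHp. intros j x. unfold upd. destruct (j =? n); tauto || apply H. }
    firstorder.
Qed.


Definition Zero z := AEq (TAdd (TVar z) (TVar z)) (TVar z).
Definition One o w := AAllN w (AEq (TMul (TVar w) (TVar o)) (TVar w)).
Definition Pi x y := TAdd (TMul (TAdd x y) (TAdd x y)) x.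
Definition C1 := AAllN 20 (AAllN 21 (AImp (AAnd (Zero 20) (One 21 22)) (AMem (Pi (TVar 20) (TVar 21)) 0))).
Definition C2 := AAllN 20 (AAllN 21 (AAllN 23 (AImp (AAnd (AMem (Pi (TVar 20) (TVar 21)) 0) (One 23 22))
   (AMem (Pi (TAdd (TVar 20) (TVar 23)) (TAdd (TVar 21) (TVar 21))) 0)))).
Definition Pow2 kv ev := AAllS 0 (AImp (AAnd C1 C2) (AMem (Pi (TVar kv) (TVar ev)) 0)).

Definition pi x y := (x + y) * (x + y) + x.
Lemma pi_inj x y x' y' : pi x y = pi x' y' -> x = x' /\ y = y'.
Proof.
  unfold pi. intros H.
  destruct (Nat.lt_trichotomy (x + y) (x' + y')) as [L|[E|L]].
  - assert ((x+y+1)*(x+y+1) <= (x'+y')*(x'+y')) by (apply Nat.mul_le_mono; lia). nia.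
  - rewrite E in H. lia.
  - assert ((x'+y'+1)*(x'+y'+1) <= (x+y)*(x+y)) by (apply Nat.mul_le_mono; lia). nia.
Qed.

Lemma Pow2_sem rho sg kv ev : asat rho sg (Pow2 kv ev) <-> rho ev = 2 ^ rho kv.
Proof.
  unfold Pow2, C1, C2, Zero, One, Pi. cbn [asat teval]. unfold upd. cbn [Nat.eqb].
  split.
  - intros H. pose (Sx := fun w => exists x, w = pi x (2 ^ x)).
    assert (HS : Sx (pi (rho kv) (rho ev))).
    { apply (H Sx). split.
      - intros m m0 [H1 H2]. exists 0. specialize (H2 1). unfold pi. simpl. nia.
      - intros m m0 m1 [[x Hx] H2]. specialize (H2 1). exists (S x).
        unfold pi in *. apply pi_inj in Hx. destruct Hx; subst. simpl. nia. }
    destruct HS as [x Hx]. apply pi_inj in Hx. destruct Hx; subst. auto.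
  - intros He Sx [H1 H2]. rewrite He. generalize (rho kv) as k. intros k.
    induction k.
    + specialize (H1 0 1). simpl in H1. simpl. apply H1. split; intros; lia.
    + specialize (H2 k (2 ^ k) 1).
      replace (S k + 2 ^ S k) with (k + 1 + (2 ^ k + 2 ^ k)) by (simpl; lia).
      replace (S k) with (k + 1) by lia. apply H2. split; auto. intros; lia.
Qed.

Lemma testbit_char n k : Nat.testbit n k = true <->
  exists q r, r < 2 ^ k /\ n = q * (2 ^ k + 2 ^ k) + (2 ^ k + r).
Proof.
  assert (Hp : 2 ^ k <> 0) by (apply Nat.pow_nonzero; lia).
  pose proof (Nat.testbit_spec' n k) as Hs.
  split.
  - intros Ht. rewrite Ht in Hs. change (Nat.b2n true) with 1 in Hs.
    pose proof (Nat.div_mod n (2 ^ k) Hp) as E1.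
    pose proof (Nat.mod_upper_bound n (2 ^ k) Hp) as B1.
    pose proof (Nat.div_mod (n / 2 ^ k) 2 ltac:(lia)) as E2.
    exists (n / 2 ^ k / 2), (n mod 2 ^ k). split; auto.
    rewrite <- Hs in E2. nia.
  - intros (q & r & Hr & Hn).
    assert (n / 2 ^ k = 2 * q + 1) as Hd.
    { symmetry. apply (Nat.div_unique n (2 ^ k) (2 * q + 1) r); auto. nia. }
    rewrite Hd in Hs.
    replace (2 * q + 1) with (1 + q * 2) in Hs by lia.
    replace ((1 + q * 2) mod 2) with 1 in Hs by (rewrite Nat.Div0.mod_add; reflexivity).
    destruct (Nat.testbit n k); simpl in Hs; auto; discriminate.
Qed.

Definition Bit13 := AExN 10 (AExN 11 (AExN 12 (AExN 13 (AExN 14 (AAnd (Pow2 3 10)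
  (AAnd (One 14 15) (AAnd (AEq (TVar 1) (TAdd (TMul (TVar 11) (TAdd (TVar 10) (TVar 10))) (TAdd (TVar 10) (TVar 12))))
     (AEq (TAdd (TAdd (TVar 12) (TVar 13)) (TVar 14)) (TVar 10))))))))).

Lemma Bit_sem rho sg : asat rho sg Bit13 <-> Nat.testbit (rho 1) (rho 3) = true.
Proof.
  unfold Bit13, One. cbn [asat teval]. setoid_rewrite Pow2_sem. unfold upd. cbn [Nat.eqb].
  rewrite testbit_char. split.
  - intros (e & q & r & d & o & He & Ho & Hn & Hd). specialize (Ho 1).
    exists q, r. subst e. split; [lia|]. rewrite Hn. lia.
  - intros (q & r & Hr & Hn). exists (2 ^ rho 3), q, r, (2 ^ rho 3 - r - 1), 1.
    repeat split; auto; try lia.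
Qed.


Definition Kr {X} (beta kappa : nat -> X -> Prop) i n :=
  subset (kappa i) (fun x => exists a, D n a /\ beta a x).
Definition Kb pK := AExN 1 (AAnd (Pow2 2 1) pK).
Definition Cov pK s := AAllN 0 (AImp (Kb pK) (AExN 1 (AAnd pK (AAllN 3 (AImp Bit13 (AMem (TVar 3) s)))))).
Definition Sat pK s := AAllN 2 (AImp (Cov pK s) (AMem (TVar 2) s)).

Definition anK {X} (beta kappa : nat -> X -> Prop) pK :=
  afree_in (fun k => k = 0 \/ k = 1) (fun _ => False) pK /\
  forall i n, Kr beta kappa i n <->
     asat (upd (upd (fun _ => 0) 0 i) 1 n) (fun _ _ => False) pK.

Lemma K_sem {X} (beta kappa : nat -> X -> Prop) pK : anK beta kappa pK ->
  forall rho sg, asat rho sg pK <-> Kr beta kappa (rho 0) (rho 1).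
Proof.
  intros [Hf Hk] rho sg. rewrite Hk.
  apply (asat_free pK _ _ _ _ _ _ Hf); [|intros k []].
  intros k [->| ->]; unfold upd; simpl; auto.
Qed.

Lemma Sat_sem {X} (beta kappa : nat -> X -> Prop) pK : anK beta kappa pK ->
  forall rho sg s, asat rho sg (Sat pK s) <->
   forall a, (forall i, Kr beta kappa i (2 ^ a) -> exists n, Kr beta kappa i n /\
      forall k, Nat.testbit n k = true -> sg s k) -> sg s a.
Proof.
  intros HK rho sg s. unfold Sat, Cov, Kb. cbn [asat teval].
  setoid_rewrite (K_sem beta kappa pK HK). setoid_rewrite Pow2_sem. setoid_rewrite Bit_sem.
  unfold upd; cbn [Nat.eqb].
  split.
  - intros H a Ha. apply (H a). intros i [n [Hn Hk]]. subst n. apply Ha; auto.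
  - intros H a Ha. apply (H a). intros i Hk. apply (Ha i). exists (2 ^ a). auto.
Qed.

Section Top.
Context {X : Type} (opn : (X -> Prop) -> Prop) (beta kappa : nat -> X -> Prop).

Definition UU (A : nat -> Prop) : X -> Prop := fun x => exists a, A a /\ beta a x.
Definition AU (U : X -> Prop) : nat -> Prop := fun a => subset (beta a) U.
Definition SatP (A : nat -> Prop) := forall a, subset (beta a) (UU A) -> A a.

Lemma Kr_pow2 i a : Kr beta kappa i (2 ^ a) <-> subset (kappa i) (beta a).
Proof.
  unfold Kr, subset, D. setoid_rewrite Nat.pow2_bits_eqb. split.
  - intros H x Hx. destruct (H x Hx) as [b [Hb Hb']]. apply Nat.eqb_eq in Hb. subst; auto.
  - intros H x Hx. exists a. rewrite Nat.eqb_refl. auto.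
Qed.

Lemma list_code (A : nat -> Prop) (l : list (X -> Prop)) :
  (forall U, In U l -> exists b, A b /\ U = beta b) ->
  exists n, (forall k, Nat.testbit n k = true -> A k) /\
    (forall U, In U l -> exists b, Nat.testbit n b = true /\ U = beta b).
Proof.
  induction l as [|U l IH]; intros H.
  - exists 0. split; [intros k; rewrite Nat.bits_0; discriminate|intros U []].
  - destruct (H U (or_introl eq_refl)) as [b [Hb ->]].
    destruct IH as [n [H1 H2]]. intros; apply H; simpl; auto.
    exists (Nat.setbit n b). split.
    + intros k Hk. apply Nat.setbit_iff in Hk. destruct Hk as [<-|]; auto.
    + intros V [<-|HV]. exists b. rewrite Nat.setbit_eq. auto.
      destruct (H2 V HV) as [c [Hc ->]]. exists c. rewrite Nat.setbit_iff. auto.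
Qed.

Hypothesis HA : AnLCS opn beta kappa.

Lemma cover_iff A a : (forall i, Kr beta kappa i (2 ^ a) -> exists n, Kr beta kappa i n /\
      forall k, Nat.testbit n k = true -> A k) <-> subset (beta a) (UU A).
Proof.
  destruct HA as (Htop & [Hbo Hbs] & He & Hc & Hk & Ha).
  split.
  - intros H x Hx. destruct (Hk a) as [Sa HSa].
    destruct (proj1 (HSa x) Hx) as [i [Hi Hix]].
    assert (subset (kappa i) (beta a)) as Hia.
    { intros y Hy. apply HSa. eauto. }
    apply Kr_pow2 in Hia. destruct (H i Hia) as [n [Hn HnA]].
    destruct (Hn x Hix) as [b [Hb1 Hb2]]. exists b. split; auto.
  - intros H i Hi. apply Kr_pow2 in Hi.
    destruct (Hc i (fun U => exists b, A b /\ U = beta b)) as [l [Hl1 Hl2]].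
    + intros U [b [_ ->]]. auto.
    + intros x Hx. destruct (H x (Hi x Hx)) as [b [Hb1 Hb2]]. exists (beta b). eauto.
    + destruct (list_code A l Hl1) as [n [Hn1 Hn2]]. exists n. split; auto.
      intros x Hx. destruct (Hl2 x Hx) as [U [HU HUx]]. destruct (Hn2 U HU) as [b [Hb ->]].
      exists b. split; auto.
Qed.

Lemma UU_open A : opn (UU A).
Proof.
  destruct HA as (Htop & [Hbo Hb] & _).
  apply (top_ext _ Htop (fun x => exists U, (fun V => exists a, A a /\ V = beta a) U /\ U x)).
  - intros x. split.
    + intros [U [[a [Ha ->]] Hx]]. exists a; auto.
    + intros [a [Ha Hx]]. exists (beta a). eauto.
  - apply top_union; auto. intros U [a [_ ->]]. auto.
Qed.

Lemma AU_sat U : SatP (AU U).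
Proof.
  intros a H x Hx. destruct (H x Hx) as [b [Hb Hbx]]. apply Hb; auto.
Qed.

Lemma UU_AU U : opn U -> forall x, UU (AU U) x <-> U x.
Proof.
  destruct HA as (Htop & [Hbo Hb] & _). intros HU x. split.
  - intros [a [Ha Hx]]. apply Ha; auto.
  - intros Hx. destruct (Hb U HU x Hx) as [n [H1 H2]]. exists n. split; auto.
Qed.

Lemma sat_sub A B : SatP B -> (subset (UU A) (UU B) <-> forall k, A k -> B k).
Proof.
  intros HB. split.
  - intros H k Hk. apply HB. intros x Hx. apply H. exists k; auto.
  - intros H x [a [Ha Hx]]. exists a; auto.
Qed.

End Top.


Fixpoint tr (pK : aform) (p : lform) : aform :=
  match p with
  | LSub i j => AAllN 0 (AImp (AMem (TVar 0) i) (AMem (TVar 0) j))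
  | LEq i j => AAllN 0 (AAnd (AImp (AMem (TVar 0) i) (AMem (TVar 0) j))
                            (AImp (AMem (TVar 0) j) (AMem (TVar 0) i)))
  | LNot q => ANot (tr pK q)
  | LAnd q r => AAnd (tr pK q) (tr pK r)
  | LOr q r => AOr (tr pK q) (tr pK r)
  | LImp q r => AImp (tr pK q) (tr pK r)
  | LAll i q => AAllS i (AImp (Sat pK i) (tr pK q))
  | LEx i q => AExS i (AAnd (Sat pK i) (tr pK q))
  end.

Section Sem.
Context {X : Type} (opn : (X -> Prop) -> Prop) (beta kappa : nat -> X -> Prop) (pK : aform).
Hypothesis HA : AnLCS opn beta kappa.
Hypothesis HK : anK beta kappa pK.

Lemma Sat_sem2 rho sg s : asat rho sg (Sat pK s) <-> SatP beta (sg s).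
Proof.
  rewrite (Sat_sem beta kappa pK HK). unfold SatP.
  setoid_rewrite (cover_iff opn beta kappa HA). tauto.
Qed.

Lemma tr_sem p : forall rho sg, (forall j, SatP beta (sg j)) ->
  (asat rho sg (tr pK p) <-> lsat opn (fun j => UU beta (sg j)) p).
Proof.
  induction p; intros rho sg Hs; cbn [tr asat lsat teval].
  - rewrite (sat_sub beta); auto. unfold upd; rewrite Nat.eqb_refl. tauto.
  - unfold upd; rewrite Nat.eqb_refl. split.
    + intros H x. split; apply (sat_sub beta); auto; intros k Hk; apply H; auto.
    + intros H m. split; intros Hm;
      [apply (proj1 (sat_sub beta (sg n) (sg n0) (Hs n0)))|apply (proj1 (sat_sub beta (sg n0) (sg n) (Hs n)))];
      auto; intros x; apply H.
  - rewrite IHp; auto. tauto.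
  - rewrite IHp1, IHp2; auto. tauto.
  - rewrite IHp1, IHp2; auto. tauto.
  - rewrite IHp1, IHp2; auto. tauto.
  - split.
    + intros H U HU.
      specialize (H (AU beta U)). rewrite Sat_sem2, upd_eq in H.
      specialize (H (AU_sat beta U)). rewrite IHp in H.
      * eapply lsat_ext; [|exact H]. intros j x. unfold upd. destruct (j =? n).
        symmetry; apply (UU_AU opn beta kappa HA); auto. tauto.
      * intros j. unfold upd. destruct (j =? n); auto. apply AU_sat.
    + intros H S. rewrite Sat_sem2, upd_eq. intros HS.
      assert (Hs' : forall j, SatP beta (upd sg n S j)).
      { intros j. unfold upd. destruct (j =? n); auto. }
      rewrite IHp; auto. specialize (H (UU beta S) (UU_open opn beta kappa HA S)).
      eapply lsat_ext; [|exact H]. intros j x. unfold upd. destruct (j =? n); tauto.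
  - split.
    + intros [S [HS H]]. rewrite Sat_sem2, upd_eq in HS.
      assert (Hs' : forall j, SatP beta (upd sg n S j)).
      { intros j. unfold upd. destruct (j =? n); auto. }
      rewrite IHp in H; auto. exists (UU beta S). split. apply (UU_open opn beta kappa HA).
      eapply lsat_ext; [|exact H]. intros j x. unfold upd. destruct (j =? n); tauto.
    + intros [U [HU H]]. exists (AU beta U). rewrite Sat_sem2, upd_eq. split. apply AU_sat.
      rewrite IHp.
      * eapply lsat_ext; [|exact H]. intros j x. unfold upd. destruct (j =? n).
        apply (UU_AU opn beta kappa HA); auto. tauto.
      * intros j. unfold upd. destruct (j =? n); auto. apply AU_sat.
Qed.
End Sem.


Strategy opaque [cpair].
Definition tg k := fst' k.
Definition a1 k := fst' (snd' k).
Definition b1 k := snd' (snd' k).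
Lemma cf_tg : CF 1 (fun l => tg (nth 0 l 0)). Proof. unfold tg. cf. Qed.
Lemma cf_a1 : CF 1 (fun l => a1 (nth 0 l 0)). Proof. unfold a1. cf. Qed.
Lemma cf_b1 : CF 1 (fun l => b1 (nth 0 l 0)). Proof. unfold b1. cf. Qed.
Ltac prim h ::= lazymatch h with | S => exact cf_succ | Nat.add => exact cf_add | Nat.mul => exact cf_mul | Nat.pred => exact cf_pred | Nat.sub => exact cf_sub | cond => exact cf_cond | lebn => exact cf_lebn | eqbn => exact cf_eqbn | tri => exact cf_tri | sdiag => exact cf_sdiag | snd' => exact cf_snd | fst' => exact cf_fst | cp => exact cf_cp | cpair => exact cf_cpair | itsnd => exact cf_iter | look => exact cf_look | tg => exact cf_tg | a1 => exact cf_a1 | b1 => exact cf_b1 end.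

Definition cSat pK s := acode (Sat pK s).
Lemma cf_cSat pK : CF 1 (fun l => cSat pK (nth 0 l 0)).
Proof. unfold cSat, Sat, Cov. cbn [acode]. cf. Qed.
Definition cSub i j := acode (tr (AEq (TVar 0) (TVar 0)) (LSub i j)).
Definition cEq i j := acode (tr (AEq (TVar 0) (TVar 0)) (LEq i j)).
Lemma cf_cSub : CF 2 (fun l => cSub (nth 0 l 0) (nth 1 l 0)).
Proof. unfold cSub. cbn [acode tr]. cf. Qed.
Lemma cf_cEq : CF 2 (fun l => cEq (nth 0 l 0) (nth 1 l 0)).
Proof. unfold cEq. cbn [acode tr]. cf. Qed.
Opaque cSub cEq cSat.

Definition TRstep pK (v k h : nat) :=
  cond (eqbn (tg k) 0) (cSub (a1 k) (b1 k))
  (cond (eqbn (tg k) 1) (cEq (a1 k) (b1 k))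
  (cond (eqbn (tg k) 2) (cpair 2 (look (snd' k) k h))
  (cond (eqbn (tg k) 3) (cpair 3 (cpair (look (a1 k) k h) (look (b1 k) k h)))
  (cond (eqbn (tg k) 4) (cpair 4 (cpair (look (a1 k) k h) (look (b1 k) k h)))
  (cond (eqbn (tg k) 5) (cpair 5 (cpair (look (a1 k) k h) (look (b1 k) k h)))
  (cond (eqbn (tg k) 6) (cpair 8 (cpair (a1 k) (cpair 5 (cpair (cSat pK (a1 k)) (look (b1 k) k h)))))
  (cond (eqbn (tg k) 7) (cpair 9 (cpair (a1 k) (cpair 3 (cpair (cSat pK (a1 k)) (look (b1 k) k h)))))
   0))))))).

Definition Vstep (v k h : nat) :=
  cond (lebn (tg k) 1) 1
  (cond (eqbn (tg k) 2) (look (snd' k) k h)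
  (cond (lebn (tg k) 5) (look (a1 k) k h * look (b1 k) k h)
  (cond (lebn (tg k) 7) (look (b1 k) k h) 0))).

Definition OFstep (v k h : nat) :=
  cond (lebn (tg k) 1) (cond (eqbn (a1 k) v) 1 (eqbn (b1 k) v))
  (cond (eqbn (tg k) 2) (look (snd' k) k h)
  (cond (lebn (tg k) 5) (cond (look (a1 k) k h) 1 (look (b1 k) k h))
  (cond (lebn (tg k) 7) (cond (eqbn (a1 k) v) 0 (look (b1 k) k h)) 0))).

Lemma cf_TRstep pK : CF 3 (fun l => TRstep pK (nth 0 l 0) (nth 1 l 0) (nth 2 l 0)).
Proof.
  unfold TRstep.
  Ltac prim h ::= lazymatch h with | cSat ?pK => exact (cf_cSat pK) | cSub => exact cf_cSub | cEq => exact cf_cEq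
    | _ => lazymatch h with | S => exact cf_succ | Nat.add => exact cf_add | Nat.mul => exact cf_mul | Nat.sub => exact cf_sub
    | cond => exact cf_cond | lebn => exact cf_lebn | eqbn => exact cf_eqbn | cpair => exact cf_cpair | look => exact cf_look
    | tg => exact cf_tg | a1 => exact cf_a1 | b1 => exact cf_b1 | snd' => exact cf_snd | fst' => exact cf_fst end end.
  cf.
Qed.
Lemma cf_Vstep : CF 3 (fun l => Vstep (nth 0 l 0) (nth 1 l 0) (nth 2 l 0)).
Proof. unfold Vstep. cf. Qed.
Lemma cf_OFstep : CF 3 (fun l => OFstep (nth 0 l 0) (nth 1 l 0) (nth 2 l 0)).
Proof. unfold OFstep. cf. Qed.


Lemma cpair_inj a b c d : cpair a b = cpair c d -> a = c /\ b = d.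
Proof. rewrite !cpair_cp. apply cp_inj. Qed.

Lemma tcode_inj s : forall t, tcode s = tcode t -> s = t.
Proof.
  induction s; destruct t; simpl; intros H; apply cpair_inj in H; destruct H as [H1 H2];
    try discriminate; try (subst; reflexivity);
    apply cpair_inj in H2; destruct H2; f_equal; auto.
Qed.

Lemma acode_inj p : forall q, acode p = acode q -> p = q.
Proof.
  induction p; destruct q; simpl; intros H; apply cpair_inj in H; destruct H as [H1 H2];
    try discriminate; try (f_equal; auto; fail);
    try (apply cpair_inj in H2; destruct H2 as [H2 H3]; f_equal; auto using tcode_inj).
Qed.

Fixpoint ofb (v : nat) (p : lform) : bool :=
  match p with
  | LSub i j | LEq i j => (i =? v) || (j =? v)
  | LNot q => ofb v q
  | LAnd q r | LOr q r | LImp q r => ofb v q || ofb v r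
  | LAll i q | LEx i q => if i =? v then false else ofb v q
  end.

Lemma lfree_iff p : forall bd : nat -> Prop, lfree_in bd p <-> (forall v, ofb v p = true -> bd v).
Proof.
  induction p; intros bd; simpl.
  - split. intros [H1 H2] v Hv. apply Bool.orb_true_iff in Hv as [Hv|Hv]; apply Nat.eqb_eq in Hv; subst; auto.
    intros H. split; apply H; rewrite Nat.eqb_refl; auto using Bool.orb_true_r.
  - split. intros [H1 H2] v Hv. apply Bool.orb_true_iff in Hv as [Hv|Hv]; apply Nat.eqb_eq in Hv; subst; auto.
    intros H. split; apply H; rewrite Nat.eqb_refl; auto using Bool.orb_true_r.
  - apply IHp.
  - rewrite IHp1, IHp2. split. intros [H1 H2] v Hv. apply Bool.orb_true_iff in Hv as [Hv|Hv]; auto.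
    intros H; split; intros v Hv; apply H; rewrite Hv; auto using Bool.orb_true_r.
  - rewrite IHp1, IHp2. split. intros [H1 H2] v Hv. apply Bool.orb_true_iff in Hv as [Hv|Hv]; auto.
    intros H; split; intros v Hv; apply H; rewrite Hv; auto using Bool.orb_true_r.
  - rewrite IHp1, IHp2. split. intros [H1 H2] v Hv. apply Bool.orb_true_iff in Hv as [Hv|Hv]; auto.
    intros H; split; intros v Hv; apply H; rewrite Hv; auto using Bool.orb_true_r.
  - rewrite IHp. split.
    + intros H v Hv. destruct (n =? v) eqn:E; [discriminate|]. apply Nat.eqb_neq in E.
      destruct (H v Hv); auto. congruence.
    + intros H v Hv. destruct (Nat.eq_dec v n); auto. right. apply H.
      replace (n =? v) with false; auto. symmetry; apply Nat.eqb_neq; auto.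
  - rewrite IHp. split.
    + intros H v Hv. destruct (n =? v) eqn:E; [discriminate|]. apply Nat.eqb_neq in E.
      destruct (H v Hv); auto. congruence.
    + intros H v Hv. destruct (Nat.eq_dec v n); auto. right. apply H.
      replace (n =? v) with false; auto. symmetry; apply Nat.eqb_neq; auto.
Qed.

Lemma cp_le_l a b : a <= cp a b. Proof. pose proof (cp_ge a b). lia. Qed.
Lemma cp_le_r a b : b <= cp a b. Proof. pose proof (cp_ge a b). lia. Qed.

Lemma ofb_bound v p : ofb v p = true -> v <= lcode p.
Proof.
  induction p; simpl; rewrite ?cpair_cp; intros H.
  - pose proof (cp_le_r 0 (cp n n0)). pose proof (cp_le_l n n0). pose proof (cp_le_r n n0).
    apply Bool.orb_true_iff in H; destruct H as [H|H]; apply Nat.eqb_eq in H; subst; lia.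
  - pose proof (cp_le_r 1 (cp n n0)). pose proof (cp_le_l n n0). pose proof (cp_le_r n n0).
    apply Bool.orb_true_iff in H; destruct H as [H|H]; apply Nat.eqb_eq in H; subst; lia.
  - pose proof (cp_le_r 2 (lcode p)). specialize (IHp H). lia.
  - pose proof (cp_le_r 3 (cp (lcode p1) (lcode p2))). pose proof (cp_le_l (lcode p1) (lcode p2)).
    pose proof (cp_le_r (lcode p1) (lcode p2)).
    apply Bool.orb_true_iff in H; destruct H as [H|H]; [specialize (IHp1 H)|specialize (IHp2 H)]; lia.
  - pose proof (cp_le_r 4 (cp (lcode p1) (lcode p2))). pose proof (cp_le_l (lcode p1) (lcode p2)).
    pose proof (cp_le_r (lcode p1) (lcode p2)).
    apply Bool.orb_true_iff in H; destruct H as [H|H]; [specialize (IHp1 H)|specialize (IHp2 H)]; lia.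
  - pose proof (cp_le_r 5 (cp (lcode p1) (lcode p2))). pose proof (cp_le_l (lcode p1) (lcode p2)).
    pose proof (cp_le_r (lcode p1) (lcode p2)).
    apply Bool.orb_true_iff in H; destruct H as [H|H]; [specialize (IHp1 H)|specialize (IHp2 H)]; lia.
  - pose proof (cp_le_r 6 (cp n (lcode p))). pose proof (cp_le_r n (lcode p)).
    destruct (n =? v); [discriminate|]. specialize (IHp H). lia.
  - pose proof (cp_le_r 7 (cp n (lcode p))). pose proof (cp_le_r n (lcode p)).
    destruct (n =? v); [discriminate|]. specialize (IHp H). lia.
Qed.


Lemma cp_lt1 t x : 1 <= t -> x < cp t x.
Proof. intros. pose proof (cp_ge t x). lia. Qed.
Lemma cp_lt2 t a b : 1 <= t -> a < cp t (cp a b).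
Proof. intros. pose proof (cp_ge t (cp a b)). pose proof (cp_ge a b). lia. Qed.
Lemma cp_lt3 t a b : 1 <= t -> b < cp t (cp a b).
Proof. intros. pose proof (cp_ge t (cp a b)). pose proof (cp_ge a b). lia. Qed.

Ltac lt_solve := first [apply cp_lt1; lia | apply cp_lt2; lia | apply cp_lt3; lia].

Ltac cpsimp := repeat match goal with
 | |- context [fst' (cp ?a ?b)] => rewrite (fst_cp a b)
 | |- context [snd' (cp ?a ?b)] => rewrite (snd_cp a b) end.
Ltac lookr := repeat match goal with
 | |- context [look ?j ?k (Htab ?G ?v ?k)] => rewrite (look_ok G v j k) by lt_solve end.
Ltac cstep G := unfold Fcv at 1; cbn [lcode]; rewrite ?cpair_cp;
  unfold G at 1; unfold tg, a1, b1; cpsimp; cbn [cond lebn eqbn Nat.sub]; lookr.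

Definition Vn n := Fcv Vstep 0 n.

Lemma V_complete p : Vn (lcode p) <> 0.
Proof.
  unfold Vn. induction p; cstep Vstep; auto; nia.
Qed.

Lemma fst_le x : fst' x <= x.
Proof. rewrite <- (cp_surj x) at 2. apply cp_le_l. Qed.
Lemma snd_le x : snd' x <= x.
Proof. rewrite <- (cp_surj x) at 2. apply cp_le_r. Qed.
Lemma cp_lt4 t x : 1 <= t -> fst' x < cp t x.
Proof. intros. pose proof (fst_le x). pose proof (cp_lt1 t x H). lia. Qed.
Lemma cp_lt5 t x : 1 <= t -> snd' x < cp t x.
Proof. intros. pose proof (snd_le x). pose proof (cp_lt1 t x H). lia. Qed.

Ltac lt_solve2 := first [apply cp_lt1; lia | apply cp_lt4; lia | apply cp_lt5; lia].

Lemma V_sound n : Vn n <> 0 -> exists p, lcode p = n.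
Proof.
  induction n as [n IH] using lt_wf_ind. intros Hn.
  set (t := fst' n) in *. set (x := snd' n) in *.
  assert (E : n = cp t x) by (symmetry; apply cp_surj). clearbody t x. subst n.
  unfold Vn, Fcv at 1 in Hn. unfold Vstep at 1 in Hn. unfold tg, a1, b1 in Hn.
  rewrite fst_cp, snd_cp in Hn.
  destruct t as [|[|[|[|[|[|[|[|t]]]]]]]]; cbn [cond lebn eqbn Nat.sub] in Hn;
    repeat (rewrite look_ok in Hn by lt_solve2);
    fold (Vn (fst' x)) (Vn (snd' x)) (Vn x) in Hn.
  - exists (LSub (fst' x) (snd' x)). simpl. rewrite !cpair_cp, cp_surj. reflexivity.
  - exists (LEq (fst' x) (snd' x)). simpl. rewrite !cpair_cp, cp_surj. reflexivity.
  - destruct (IH x) as [q Hq]; auto. apply cp_lt1; lia.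
    exists (LNot q). simpl. rewrite !cpair_cp, Hq. reflexivity.
  - destruct (IH (fst' x)) as [q Hq]; [apply cp_lt4; lia|intro; apply Hn; rewrite H; auto|].
    destruct (IH (snd' x)) as [r Hr]; [apply cp_lt5; lia|intro; apply Hn; rewrite H; lia|].
    exists (LAnd q r). simpl. rewrite !cpair_cp, Hq, Hr, cp_surj. reflexivity.
  - destruct (IH (fst' x)) as [q Hq]; [apply cp_lt4; lia|intro; apply Hn; rewrite H; auto|].
    destruct (IH (snd' x)) as [r Hr]; [apply cp_lt5; lia|intro; apply Hn; rewrite H; lia|].
    exists (LOr q r). simpl. rewrite !cpair_cp, Hq, Hr, cp_surj. reflexivity.
  - destruct (IH (fst' x)) as [q Hq]; [apply cp_lt4; lia|intro; apply Hn; rewrite H; auto|].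
    destruct (IH (snd' x)) as [r Hr]; [apply cp_lt5; lia|intro; apply Hn; rewrite H; lia|].
    exists (LImp q r). simpl. rewrite !cpair_cp, Hq, Hr, cp_surj. reflexivity.
  - destruct (IH (snd' x)) as [r Hr]; [apply cp_lt5; lia|auto|].
    exists (LAll (fst' x) r). simpl. rewrite !cpair_cp, Hr, cp_surj. reflexivity.
  - destruct (IH (snd' x)) as [r Hr]; [apply cp_lt5; lia|auto|].
    exists (LEx (fst' x) r). simpl. rewrite !cpair_cp, Hr, cp_surj. reflexivity.
  - exfalso. apply Hn. reflexivity.
Qed.

Definition OFn v n := Fcv OFstep v n.
Lemma OF_code v p : OFn v (lcode p) = if ofb v p then 1 else 0.
Proof.
  unfold OFn. induction p; cstep OFstep; cbn [ofb]; rewrite ?eqbn_spec;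
  rewrite ?IHp, ?IHp1, ?IHp2;
  repeat match goal with |- context [?a =? ?b] => destruct (a =? b) end;
  repeat match goal with |- context [ofb ?a ?b] => destruct (ofb a b) end; reflexivity.
Qed.

Transparent cSub cEq cSat.
Lemma cSub_eq pK i j : cSub i j = acode (tr pK (LSub i j)). Proof. reflexivity. Qed.
Lemma cEq_eq pK i j : cEq i j = acode (tr pK (LEq i j)). Proof. reflexivity. Qed.
Lemma cSat_eq pK i : cSat pK i = acode (Sat pK i). Proof. reflexivity. Qed.
Opaque cSub cEq cSat.

Definition TRn pK n := Fcv (TRstep pK) 0 n.
Lemma TR_code pK p : TRn pK (lcode p) = acode (tr pK p).
Proof.
  unfold TRn. induction p; cstep TRstep;
    rewrite ?IHp, ?IHp1, ?IHp2, ?cSat_eq, ?(cSub_eq pK), ?(cEq_eq pK); cbn [tr acode]; reflexivity.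
Qed.


Lemma Sat_free pK (bn bs : nat -> Prop) s : afree_in (fun k => k = 0 \/ k = 1) (fun _ => False) pK ->
  bs s -> afree_in bn bs (Sat pK s).
Proof.
  intros HK Hs. unfold Sat, Cov, Kb, Bit13, Pow2, C1, C2, One, Zero, Pi. cbn [afree_in tvars_in].
  repeat split; try (eapply afree_mono; [| |exact HK]; intros k Hk; [destruct Hk as [-> | ->]; tauto|contradiction]);
  repeat (first [left; reflexivity | right]); auto.
Qed.

Lemma tr_free pK (bn : nat -> Prop) p : afree_in (fun k => k = 0 \/ k = 1) (fun _ => False) pK ->
  forall bd, lfree_in bd p -> afree_in bn bd (tr pK p).
Proof.
  intros HK. induction p; intros bd Hf; cbn [tr afree_in tvars_in lfree_in] in *; intuition.
  all: apply Sat_free; auto.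
Qed.

Definition FALSEf := AAllN 0 (ANot (AEq (TVar 0) (TVar 0))).
Fixpoint sumOF m n := match m with 0 => 0 | S m' => sumOF m' n + OFn m' n end.
Definition Sentn n := sumOF (S n) n.
Definition fred pK n := cond (Vn n) (cond (Sentn n) (acode FALSEf) (TRn pK n)) (acode FALSEf).

Lemma cf_Vn : CF 1 (fun l => Vn (nth 0 l 0)).
Proof.
  unfold Vn. apply (CF_comp2 1 (Fcv Vstep) (fun _ => 0) (fun l => nth 0 l 0)).
  exact (cf_Fcv _ cf_Vstep). cf. cf.
Qed.
Lemma cf_TRn pK : CF 1 (fun l => TRn pK (nth 0 l 0)).
Proof.
  unfold TRn. apply (CF_comp2 1 (Fcv (TRstep pK)) (fun _ => 0) (fun l => nth 0 l 0)).
  exact (cf_Fcv _ (cf_TRstep pK)). cf. cf.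
Qed.
Lemma cf_OFn : CF 2 (fun l => OFn (nth 0 l 0) (nth 1 l 0)).
Proof. exact (cf_Fcv _ cf_OFstep). Qed.

Ltac prim h ::= lazymatch h with
    | OFn => exact cf_OFn | Vn => exact cf_Vn | TRn ?pK => exact (cf_TRn pK)
    | S => exact cf_succ | Nat.add => exact cf_add | Nat.mul => exact cf_mul | Nat.sub => exact cf_sub
    | cond => exact cf_cond | lebn => exact cf_lebn | eqbn => exact cf_eqbn | cpair => exact cf_cpair end.

Lemma cf_sumOF : CF 2 (fun l => sumOF (nth 0 l 0) (nth 1 l 0)).
Proof.
  pose proof (CF_prec 1 (fun l => 0) (fun l => nth 1 l 0 + OFn (nth 0 l 0) (nth 2 l 0))) as H.
  eapply CF_ext; [|apply H; cf].
  intros l Hl. destruct l as [|a [|b []]]; simpl in Hl; try lia. simpl.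
  induction a; simpl; auto; rewrite IHa; reflexivity.
Qed.

Lemma cf_fred pK : CF 1 (fun l => fred pK (nth 0 l 0)).
Proof.
  unfold fred, Sentn.
  Ltac prim h ::= lazymatch h with
    | sumOF => exact cf_sumOF | Vn => exact cf_Vn | TRn ?pK => exact (cf_TRn pK)
    | S => exact cf_succ | cond => exact cf_cond end.
  cf.
Qed.


Lemma sumOF_zero m n : sumOF m n = 0 <-> forall v, v < m -> OFn v n = 0.
Proof.
  induction m; simpl. split; auto; intros; lia.
  rewrite Nat.eq_add_0, IHm. split.
  - intros [H1 H2] v Hv. destruct (Nat.eq_dec v m). subst; auto. apply H1; lia.
  - intros H. split; auto.
Qed.

Theorem proposition3p1 (X : Type) (opn : (X -> Prop) -> Prop)
  (beta kappa : nat -> X -> Prop) (H : AnLCS opn beta kappa) :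
  many_one_le (FO_open opn) FO_N2.
Proof.
  pose proof H as HA.
  destruct H as (Htop & Hb & He & Hc & Hk & [pK [HpK1 HpK2]]).
  assert (HK : anK beta kappa pK) by (split; auto).
  exists (fred pK). split.
  { destruct (cf_fred pK) as [[p Hp]]. exists p. intros n. apply (Hp [n]). reflexivity. }
  assert (Htrans : forall q sg sg', asentence q -> asat (fun _ => 0) sg q -> asat (fun _ => 0) sg' q).
  { intros q sg sg' Hq. apply (asat_free q (fun _ => False) (fun _ => False)); auto; intros k []. }
  assert (Hfalse : forall q, acode q = acode FALSEf -> ~ asat (fun _ => 0) (fun _ _ => False) q).
  { intros q Hq. apply acode_inj in Hq. subst. simpl. intros Hx. apply (Hx 0). reflexivity. }
  intros n. split.
  - intros [p [Hp [Hs Hv]]]. subst n.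
    assert (Hsent : Sentn (lcode p) = 0).
    { apply sumOF_zero. intros v _. rewrite OF_code.
      destruct (ofb v p) eqn:E; auto. exfalso. apply (proj1 (lfree_iff p _) Hs v E). }
    assert (Hfr : fred pK (lcode p) = acode (tr pK p)).
    { unfold fred. destruct (Vn (lcode p)) eqn:EV.
      exfalso; apply (V_complete p); auto. cbn [cond]. rewrite Hsent. cbn [cond]. apply TR_code. }
    rewrite Hfr. exists (tr pK p).
    assert (Has : asentence (tr pK p)) by (apply tr_free; auto).
    split; auto. split; auto.
    set (sg := fun _ : nat => AU beta (fun _ : X => False)).
    apply (Htrans _ sg); auto.
    rewrite (tr_sem opn beta kappa pK HA HK).
    + apply Hv. intros k. apply (UU_open opn beta kappa HA).
    + intros j; apply AU_sat.
  - intros [q [Hq [Hqs Hqa]]]. unfold fred in Hq.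
    destruct (Vn n) eqn:EV.
    + cbn [cond] in Hq. exfalso. apply (Hfalse q Hq Hqa).
    + destruct (V_sound n) as [p Hp]. congruence. subst n.
      destruct (Sentn (lcode p)) eqn:ES.
      * cbn [cond] in Hq. rewrite TR_code in Hq. apply acode_inj in Hq. subst q.
        exists p. split; auto. split.
        -- unfold lsentence. apply lfree_iff. intros v Hv.
           pose proof (proj1 (sumOF_zero _ _) ES v) as Hz.
           pose proof (ofb_bound v p Hv). rewrite OF_code, Hv in Hz. discriminate Hz. lia.
        -- intros rho Hrho. set (sg := fun j => AU beta (rho j)).
           assert (Ha : asat (fun _ => 0) sg (tr pK p)) by (apply (Htrans _ (fun _ _ => False)); auto).
           rewrite (tr_sem opn beta kappa pK HA HK) in Ha; [|intros j; apply AU_sat].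
           eapply lsat_ext; [|exact Ha]. intros j x. symmetry. apply (UU_AU opn beta kappa HA); auto.
      * cbn [cond] in Hq. exfalso. apply (Hfalse q Hq Hqa).
Qed.
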